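(* Let $G$ be a connected graph and let $H$ be a hypergraph of degree 2. If $G^d$ is a hypergraph dilution of $H$, then $G$ is a minor of $H^d$.
   Context: A hypergraph $H$ is a pair $(V(H),E(H))$ with $E(H)\subseteq 2^{V(H)}$ a set; graphs are hypergraphs all of whose edges have size 2. For a vertex $v$, $I_v$ is the set of edges containing $v$; the degree of $H$ is $\max_v|I_v|$. The dual $H^d$ has $V(H^d)=E(H)$ and $E(H^d)=\{I_v : v\in V(H)\}$. A graph $G$ is a minor of a hypergraph $F$ if it is a minor of the primal graph of $F$ (vertices $V(F)$, $x,y$ adjacent iff some edge of $F$ contains both), i.e., there is $\mu:V(G)\to 2^{V(F)}$ with each $\mu(v)$ connected, the $\mu(v)$ pairwise disjoint, and for adjacent $u,v$ some primal edge joining $\mu(u)$ and $\mu(v)$. $H$ is a hypergraph dilution of $H'$ if $H$ is isomorphic to a hypergraph reachable from $H'$ by a finite sequence of: deleting a vertex (from the vertex set and all edges); deleting an edge that is a proper subset of another edge; merging on a vertex $v$, i.e., replacing all edges of $I_v$ by $(\bigcup I_v)\setminus\{v\}$. *)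

(* Defs.v *)
From mathcomp Require Import all_boot.
Set Implicit Arguments. Unset Strict Implicit. Unset Printing Implicit Defensive.

Definition hgraph (T : finType) := ({set T} * {set {set T}})%type.

Section Hyper.
Variable T : finType.
Implicit Types (H : hgraph T) (v x y : T) (S : {set T}).

Definition wf_hg H : Prop := forall e, e \in H.2 -> e \subset H.1.

Definition incident H v : {set {set T}} := [set e in H.2 | v \in e].

Definition hdeg H : nat := \max_(v in H.1) #|incident H v|.

Definition is_graph H : Prop := wf_hg H /\ forall e, e \in H.2 -> #|e| = 2.

Definition primal_adj H : rel T :=
  fun x y => (x != y) && [exists e in H.2, (x \in e) && (y \in e)].

Definition connected_in H S : Prop :=
  forall x y, x \in S -> y \in S ->
    connect (fun a b => [&& a \in S, b \in S & primal_adj H a b]) x y.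

Definition hconnected H : Prop := connected_in H H.1.

Definition del_vertex H v : hgraph T := (H.1 :\ v, [set e :\ v | e in H.2]).
Definition del_edge H (e : {set T}) : hgraph T := (H.1, H.2 :\ e).
Definition merge H v : hgraph T :=
  (H.1, (H.2 :\: incident H v) :|: [set (\bigcup_(e in incident H v) e) :\ v]).

Inductive dil_step H : hgraph T -> Prop :=
| DelVertex v : v \in H.1 -> dil_step H (del_vertex H v)
| DelEdge e f : e \in H.2 -> f \in H.2 -> e \proper f -> dil_step H (del_edge H e)
| Merge v : v \in H.1 -> incident H v != set0 -> dil_step H (merge H v).

Inductive dil_reach H : hgraph T -> Prop :=
| DilRefl : dil_reach H H
| DilStep H1 H2 : dil_reach H H1 -> dil_step H1 H2 -> dil_reach H H2.

End Hyper.

Definition hiso (T1 T2 : finType) (H1 : hgraph T1) (H2 : hgraph T2) : Prop :=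
  exists f : T1 -> T2, {in H1.1 &, injective f} /\ f @: H1.1 = H2.1 /\
    H2.2 = [set f @: e | e : {set T1} in H1.2].

Definition dilution (T1 T2 : finType) (K : hgraph T1) (H : hgraph T2) : Prop :=
  exists H', dil_reach H H' /\ hiso H' K.

Definition dual (T : finType) (H : hgraph T) : hgraph {set T} :=
  (H.2, [set incident H v | v in H.1]).

Definition is_minor (T1 T2 : finType) (G : hgraph T1) (F : hgraph T2) : Prop :=
  exists mu : T1 -> {set T2},
    (forall v, v \in G.1 -> [/\ mu v != set0, mu v \subset F.1 & connected_in F (mu v)]) /\
    (forall u v, u \in G.1 -> v \in G.1 -> u != v -> [disjoint mu u & mu v]) /\
    (forall u v, u \in G.1 -> v \in G.1 -> primal_adj G u v ->
       exists x y, [/\ x \in mu u, y \in mu v & primal_adj F x y]).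

(* Main.v *)
Require Import Defs.
From mathcomp Require Import all_boot.

Section Inv.
Variable T : finType.
Variable H : hgraph T.

Definition inv (K : hgraph T) (phi : {set T} -> {set {set T}}) : Prop :=
  [/\ wf_hg K, K.1 \subset H.1,
   (forall e, e \in K.2 -> [/\ phi e != set0, phi e \subset H.2 & connected_in (dual H) (phi e)]),
   (forall e1 e2, e1 \in K.2 -> e2 \in K.2 -> e1 != e2 -> [disjoint phi e1 & phi e2]) &
   (forall e w, e \in K.2 -> w \in e -> exists2 x, x \in phi e & w \in x)].

Lemma connected_in1 (U : finType) (F : hgraph U) x : connected_in F [set x].
Proof. move=> a b; rewrite !inE => /eqP-> /eqP->; exact: connect0. Qed.

Lemma connected_mono {U : finType} {F : hgraph U} {S S' : {set U}} {x y} :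
  S \subset S' ->
  connect (fun a b => [&& a \in S, b \in S & primal_adj F a b]) x y ->
  connect (fun a b => [&& a \in S', b \in S' & primal_adj F a b]) x y.
Proof.
move=> sS; apply: connect_sub => a b /and3P[aS bS ab]; apply: connect1.
by rewrite (subsetP sS _ aS) (subsetP sS _ bS).
Qed.

Lemma inv_init : wf_hg H -> inv H (fun e => [set e]).
Proof.
move=> wf; split=> //.
- move=> e he; split; first by apply/set0Pn; exists e; rewrite inE.
  + by rewrite sub1set.
  + exact: connected_in1.
- by move=> e1 e2 _ _ ne; rewrite disjoints1 inE.
- by move=> e w he hw; exists e; rewrite ?inE.
Qed.

Lemma inv_step K K' phi : inv K phi -> dil_step K K' -> exists phi', inv K' phi'.
Proof.
case=> wfK subK P1 P2 P3; case.
-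
  move=> v hv.
  pose pre g := odflt set0 [pick e in K.2 | e :\ v == g].
  have preS : forall g, g \in [set e :\ v | e in K.2] -> pre g \in K.2 /\ pre g :\ v = g.
    move=> g /imsetP[e he ->]; rewrite /pre; case: pickP => [e0 /andP[h1 /eqP h2]|/(_ e)] //=.
    by rewrite he eqxx.
  exists (fun g => phi (pre g)); split => /=.
  + move=> g /imsetP[e he ->]; apply: setSD; exact: wfK.
  + by apply: subset_trans subK; apply: subD1set.
  + by move=> g /preS[h _]; apply: P1.
  + move=> g1 g2 /preS[h1 e1] /preS[h2 e2] ne; apply: P2 => //.
    by apply: contra ne => /eqP eq; rewrite -e1 -e2 eq.
  + move=> g w /preS[h e] hw; apply: (P3 _ _ h).
    by move: hw; rewrite -{1}e => /setD1P[].
-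
  move=> e f he hf pef; exists phi; split => //=.
  + by move=> g /setD1P[_ hg]; apply: wfK.
  + by move=> g /setD1P[_ hg]; apply: P1.
  + by move=> g1 g2 /setD1P[_ h1] /setD1P[_ h2]; apply: P2.
  + by move=> g w /setD1P[_ hg]; apply: P3.
-
  move=> v hv hI.
  set I := incident K v.
  set N := (\bigcup_(e in I) e) :\ v.
  have IK : forall e, e \in I -> e \in K.2 /\ v \in e.
    by move=> e; rewrite inE => /andP[].
  exists (fun g => if g == N then \bigcup_(e in I) phi e else phi g).
  have inK2 : forall g, g \in K.2 :\: I :|: [set N] -> g != N -> g \in K.2 /\ g \notin I.
    move=> g; rewrite !inE => /orP[/andP[h1 h2]|->] //.
  split => /=.
  + move=> g; rewrite !inE => /orP[/andP[_ hg]|/eqP->]; first exact: wfK.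
    apply: subset_trans (subD1set _ _) _.
    by apply/bigcupsP => e /IK[he _]; apply: wfK.
  + done.
  + move=> g hg; case: (eqVneq g N) => [eN|gN] /=; last by case: (inK2 _ hg gN) => h _; apply: P1.
    split.
    * case/set0Pn: hI => e he; case: (P1 e (IK e he).1) => /set0Pn[x hx] _ _.
      by apply/set0Pn; exists x; apply/bigcupP; exists e.
    * by apply/bigcupsP => e /IK[he _]; case: (P1 e he).
    * move=> x y /bigcupP[e1 he1 hx] /bigcupP[e2 he2 hy].
      case: (IK _ he1) => k1 v1; case: (IK _ he2) => k2 v2.
      case: (P3 _ _ k1 v1) => a ha va; case: (P3 _ _ k2 v2) => b hb vb.
      case: (P1 _ k1) => _ s1 c1; case: (P1 _ k2) => _ s2 c2.
      have sub1 : phi e1 \subset \bigcup_(e in I) phi e by apply: bigcup_sup.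
      have sub2 : phi e2 \subset \bigcup_(e in I) phi e by apply: bigcup_sup.
      apply: connect_trans (connected_mono sub1 (c1 _ _ hx ha)) _.
      apply: connect_trans _ (connected_mono sub2 (c2 _ _ hb hy)).
      have [->|ab] := eqVneq a b; first exact: connect0.
      apply: connect1; apply/and3P; split.
      - by apply/bigcupP; exists e1.
      - by apply/bigcupP; exists e2.
      - rewrite /primal_adj ab /=; apply/existsP; exists (incident H v).
        have vH : v \in H.1 by apply: (subsetP subK).
        rewrite /dual /= (imset_f _ vH) /= !inE (subsetP s1 _ ha) (subsetP s2 _ hb).
        by rewrite va vb.
  + move=> g1 g2 h1 h2 ne.
    have disjI : forall g, g \in K.2 -> g \notin I -> [disjoint phi g & \bigcup_(e in I) phi e].
      move=> g hg gI; apply: bigcup_disjoint => e he.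
      apply: P2 => //; first exact: (IK e he).1.
      by apply: contra gI => /eqP->.
    case: (eqVneq g1 N) => [e1|n1]; case: (eqVneq g2 N) => [e2|n2].
    * by rewrite e1 e2 eqxx in ne.
    * case: (inK2 _ h2 n2) => k2 i2; rewrite disjoint_sym; exact: disjI.
    * case: (inK2 _ h1 n1) => k1 i1; exact: disjI.
    * case: (inK2 _ h1 n1) => k1 i1; case: (inK2 _ h2 n2) => k2 i2; exact: P2.
  + move=> g w hg hw; case: (eqVneq g N) => [e|n].
    * move: hw; rewrite e => /setD1P[_ /bigcupP[e0 he0 hw]].
      case: (P3 _ _ (IK _ he0).1 hw) => x hx wx; exists x => //.
      by apply/bigcupP; exists e0.
    * by case: (inK2 _ hg n) => k _; apply: P3.
Qed.

Lemma inv_reach K : wf_hg H -> dil_reach H K -> exists phi, inv K phi.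
Proof.
move=> wf; elim=> [|K1 K2 _ [phi hphi] st]; first by exists (fun e => [set e]); apply: inv_init.
exact: inv_step hphi st.
Qed.
End Inv.
Arguments inv_reach {T H K}.

Theorem lemmaA1 (TG TH : finType) (G : hgraph TG) (H : hgraph TH) :
  is_graph G -> hconnected G -> wf_hg H -> hdeg H = 2 ->
  dilution (dual G) H -> is_minor G (dual H).
Proof.
move=> [wfG G2] conG wfH degH [K [reach [f [finj [fV fE]]]]].
case: (inv_reach wfH reach : exists phi, @inv TH H K phi) => phi [wfK subK P1 P2 P3].
have [hinj|] := boolP [forall u in G.1, forall v in G.1,
                        (incident G u == incident G v) ==> (u == v)].
- have injI : forall u v, u \in G.1 -> v \in G.1 -> incident G u = incident G v -> u = v.
    move=> u v hu hv e; move/forallP: hinj => /(_ u); rewrite hu /=.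
    by move=> /forallP/(_ v); rewrite hv e eqxx /= => /eqP.
  pose E u := odflt set0 [pick e in K.2 | f @: e == incident G u].
  have ES : forall u, u \in G.1 -> E u \in K.2 /\ f @: E u = incident G u.
    move=> u hu; have : incident G u \in (dual G).2 by apply: imset_f.
    rewrite fE => /imsetP[e he eq]; rewrite /E.
    case: pickP => [e0 /andP[h1 /eqP h2]|/(_ e)] //=.
    by rewrite he -eq eqxx.
  have neE : forall u v, u \in G.1 -> v \in G.1 -> u != v -> E u != E v.
    move=> u v hu hv ne; apply: contra ne => /eqP eq; apply/eqP; apply: injI => //.
    by rewrite -(ES u hu).2 -(ES v hv).2 eq.
  exists (fun u => phi (E u)); split; [|split].
  + by move=> u hu; case: (ES u hu) => h _; apply: P1 h.
  + move=> u v hu hv ne; apply: P2; [exact: (ES u hu).1 | exact: (ES v hv).1 | exact: neE].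
  + move=> u v hu hv /andP[ne /existsP[g /andP[hg /andP[ug vg]]]].
    have : g \in f @: K.1 by rewrite fV.
    case/imsetP => w hw gw.
    have wE : forall u0, u0 \in G.1 -> u0 \in g -> w \in E u0.
      move=> u0 hu0 ug0; have : g \in incident G u0 by rewrite inE hg ug0.
      rewrite -(ES u0 hu0).2 => /imsetP[w' hw' gw'].
      have hw'K : w' \in K.1 by apply: (subsetP (wfK _ (ES u0 hu0).1)).
      have -> : w = w' by apply: finj => //; rewrite -gw -gw'.
      done.
    case: (P3 _ _ (ES u hu).1 (wE u hu ug)) => x hx wx.
    case: (P3 _ _ (ES v hv).1 (wE v hv vg)) => y hy wy.
    exists x, y; split => //.
    have dj := P2 _ _ (ES u hu).1 (ES v hv).1 (neE _ _ hu hv ne).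
    have xy : x != y.
      by apply/eqP => exy; move: (disjointFr dj hx); rewrite exy hy.
    rewrite /primal_adj xy /=; apply/existsP; exists (incident H w).
    have wH : w \in H.1 by apply: (subsetP subK).
    case: (P1 _ (ES u hu).1) => _ s1 _; case: (P1 _ (ES v hv).1) => _ s2 _.
    by rewrite /dual /= (imset_f _ wH) /= !inE (subsetP s1 _ hx) (subsetP s2 _ hy) wx wy.
- case/forallPn => u; rewrite negb_imply => /andP[hu /forallPn[v]].
  rewrite negb_imply => /andP[hv]; rewrite negb_imply => /andP[/eqP eI ne].
  have [z hz dz] : exists2 z, z \in H.1 & #|incident H z| = 2.
    case: (set_0Vmem H.1) => [e0|[z0 hz0]].
      by move: degH; rewrite /hdeg e0 big_pred0 // => x; rewrite inE.
    have : 0 < #|H.1| by rewrite card_gt0; apply/set0Pn; exists z0.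
    move/(eq_bigmax_cond (fun v => #|incident H v|)) => [z hz eqz].
    by exists z => //; rewrite -eqz.
  case/cards2P: (introT eqP dz) => x [y [xy ei]].
  have inI : forall a, a \in [set x; y] -> a \in H.2.
    by move=> a; rewrite -ei inE => /andP[].
  have adj : forall a b, a \in [set x; y] -> b \in [set x; y] -> a != b ->
      primal_adj (dual H) a b.
    move=> a b ha hb nab; rewrite /primal_adj nab /=; apply/existsP.
    by exists (incident H z); rewrite /dual /= (imset_f _ hz) ei ha hb.
  have Gstep : forall a b, a \in [set u; v] -> primal_adj G a b -> b \in [set u; v].
    move=> a b ha /andP[_ /existsP[g /andP[hg /andP[ag bg]]]].
    have gi : g \in incident G u.
      have : g \in incident G a by rewrite inE hg ag.
      by case/set2P: ha => -> //; rewrite -eI.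
    have gj : g \in incident G v by rewrite -eI.
    move: gi gj; rewrite !inE => /andP[_ ug] /andP[_ vg].
    have : [set u; v] == g.
      rewrite eqEcard subUset !sub1set ug vg /= (G2 g hg) cards2 ne //.
    by move/eqP=> e; move: bg; rewrite -e !inE.
  have Gonly : forall w, w \in G.1 -> w \in [set u; v].
    move=> w hw; case/connectP: (conG u w hu hw) => p pth ->.
    have gen : forall p a, a \in [set u; v] ->
        path (fun a b => [&& a \in G.1, b \in G.1 & primal_adj G a b]) a p ->
        last a p \in [set u; v].
      elim=> [|b p' IH] a ha //= /andP[/and3P[_ _ ab] pth'].
      apply: IH pth'; exact: Gstep ha ab.
    exact: gen (set21 u v) pth.
  have vu : (v == u) = false by apply/negbTE; rewrite eq_sym.
  exists (fun w => if w == u then [set x] else [set y]); split; [|split].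
  + move=> w hw; case: (w == u); split.
    * by apply/set0Pn; exists x; rewrite inE.
    * by rewrite sub1set; apply: inI; rewrite set21.
    * exact: connected_in1.
    * by apply/set0Pn; exists y; rewrite inE.
    * by rewrite sub1set; apply: inI; rewrite set22.
    * exact: connected_in1.
  + move=> a b ha hb nab.
    case/set2P: (Gonly a ha) => ea; case/set2P: (Gonly b hb) => eb; subst a b.
    * by rewrite eqxx in nab.
    * by rewrite eqxx vu disjoints1 inE.
    * by rewrite eqxx vu disjoints1 inE eq_sym.
    * by rewrite eqxx in nab.
  + move=> a b ha hb /andP[nab _].
    case/set2P: (Gonly a ha) => ea; case/set2P: (Gonly b hb) => eb; subst a b.
    * by rewrite eqxx in nab.
    * exists x, y; rewrite eqxx vu; split; rewrite ?inE //.
      by apply: adj; rewrite ?set21 ?set22.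
    * exists y, x; rewrite eqxx vu; split; rewrite ?inE //.
      by apply: adj; rewrite ?set21 ?set22 // eq_sym.
    * by rewrite eqxx in nab.
Qed.
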